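(* Let $p$ be a prime and $f>1$ an integer, and let $l=f$ if $f$ is odd and $l=2f$ if $f$ is even. Define $\boldsymbol{\mu}=(\mu_0(x),\dots,\mu_{f-1}(x))$ by $\mu_0(x)=x-1$, $\mu_1(x)=p-2-x$, and $\mu_j(x)=p-1-x$ for $2\leq j\leq f-1$. Let $\boldsymbol{\mu}^{(0)}=(x,\dots,x)$ and $\boldsymbol{\mu}^{(k)}=g^{k-1}\boldsymbol{\mu}\circ g^{k-2}\boldsymbol{\mu}\circ\cdots\circ g\boldsymbol{\mu}\circ\boldsymbol{\mu}$ for $1\leq k\leq l$. For $0\leq k\leq l$ let $\boldsymbol{m}^{(k)}\in(\mathbb{Z}/2\mathbb{Z})^f$ be the tuple whose $j$-th entry is $0$ if the coefficient of $x$ in $\mu^{(k)}_j(x)$ is $+1$ and is $1$ if it is $-1$. Then: (1) for all $1\leq k\leq l$, $\boldsymbol{m}^{(k)}=g^k\boldsymbol{m}^{(l-k)}$; (2) for $1\leq k_1,k_2\leq l-1$ with $k_1\neq k_2$, the tuples $\boldsymbol{m}^{(k_1)}$ and $\boldsymbol{m}^{(k_2)}$ are cyclic permutations of each other if and only if $k_2=l-k_1$; (3) for $1\leq k\leq l-1$, with $k\neq l/2$ when $f$ is even, $\boldsymbol{m}^{(k)}$ is not equal to any of its non-trivial cyclic permutations.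
   Context: $(\mathbb{Z}\pm x)^f$ denotes the set of $f$-tuples $\boldsymbol{\lambda}=(\lambda_0(x),\dots,\lambda_{f-1}(x))$ of polynomials of the form $a\pm x$ with $a\in\mathbb{Z}$, indices taken in $\{0,\dots,f-1\}$. Composition is componentwise: $\boldsymbol{\lambda}\circ\boldsymbol{\lambda}'=(\lambda_0(\lambda'_0(x)),\dots,\lambda_{f-1}(\lambda'_{f-1}(x)))$. The cyclic shift $g$ acts on $f$-tuples (of polynomials or of elements of $\mathbb{Z}/2\mathbb{Z}$) by $(g\boldsymbol{\lambda})_j=\lambda_{j+1}$, indices modulo $f$. Equivalently, $\mu^{(k)}_j=\mu^{(k-1)}_j-1$ if $j\equiv 1-k \pmod f$, $\mu^{(k)}_j=p-2-\mu^{(k-1)}_j$ if $j\equiv 2-k\pmod f$, and $\mu^{(k)}_j=p-1-\mu^{(k-1)}_j$ otherwise. *)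

(* Defs.v *)
From HB Require Import structures.
From mathcomp Require Import all_boot all_order all_algebra.
Set Implicit Arguments. Unset Strict Implicit. Unset Printing Implicit Defensive.
Import Order.TTheory GRing.Theory Num.Theory.
Local Open Scope ring_scope.

(* cyclic shift g : (g t)_j = t_{j+1 mod f}; g^k is iter k g *)
Definition gsh (T : Type) (f : nat) (t : {ffun 'I_f -> T}) : {ffun 'I_f -> T} :=
  [ffun j : 'I_f => t (ordS j)].

Definition gpow (T : Type) (f k : nat) (t : {ffun 'I_f -> T}) : {ffun 'I_f -> T} :=
  iter k (@gsh T f) t.

Definition tcomp (f : nat) (lam lam' : {ffun 'I_f -> {poly int}}) : {ffun 'I_f -> {poly int}} :=
  [ffun j : 'I_f => (lam j) \Po (lam' j)].

Definition mu (p f : nat) : {ffun 'I_f -> {poly int}} :=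
  [ffun j : 'I_f =>
     if val j == 0%N then 'X - 1
     else if val j == 1%N then (p%:Z - 2)%:P - 'X
     else (p%:Z - 1)%:P - 'X].

Fixpoint muk (p f k : nat) : {ffun 'I_f -> {poly int}} :=
  match k with
  | 0%N => [ffun _ => 'X]
  | k'.+1 => tcomp (gpow k' (mu p f)) (muk p f k')
  end.

(* m^(k)_j = 0 if coefficient of x in mu^(k)_j is +1, and 1 if it is -1
   (it is always +-1) *)
Definition mk (p f k : nat) : {ffun 'I_f -> 'Z_2} :=
  [ffun j : 'I_f => if (muk p f k j)`_1 == 1 then 0 else 1].

Definition ell (f : nat) : nat := if odd f then f else (2 * f)%N.

(* Main.v *)
Require Import Defs.
From HB Require Import structures.
From mathcomp Require Import all_boot all_order all_algebra.
From mathcomp Require Import zify.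
Set Implicit Arguments. Unset Strict Implicit. Unset Printing Implicit Defensive.
Import GRing.Theory.
Local Open Scope ring_scope.
Section S.
Variable n : nat.
Local Notation F := n.+2.

Lemma gpowE T i (t : {ffun 'I_F -> T}) : gpow i t = [ffun j => t (j + i%:R)].
Proof.
elim: i => [|i IH]; apply/ffunP => j.
  by rewrite ffunE addr0.
rewrite -[gpow i.+1 t]/(gsh (gpow i t)) /gsh ffunE IH !ffunE.
have -> : ordS j = j + 1 by rewrite (add_Zp_1 (p:=F) j).
by rewrite mulrS addrA.
Qed.

Fixpoint z (j : 'I_F) (k : nat) : nat :=
  if k is k'.+1 then addn (z j k') (val (j + k'%:R) == 0%N) else 0%N.

Lemma mu_comp p (j : 'I_F) (q : {poly int}) :
  ((mu p F j) \Po q)`_1 = (if val j == 0%N then 1 else -1) * q`_1.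
Proof.
rewrite ffunE; case: ifP => _; first by rewrite comp_polyB comp_polyX comp_polyC coefB coefC /= subr0 mul1r.
case: ifP => _; by rewrite comp_polyB comp_polyX comp_polyC coefB coefC /= sub0r mulN1r.
Qed.

Lemma coef_muk p k (j : 'I_F) : (muk p F k j)`_1 = (-1) ^+ (k + z j k)%N.
Proof.
elim: k => [|k IH] /=; first by rewrite ffunE coefX.
rewrite ffunE gpowE ffunE mu_comp IH.
case: (val (j + k%:R) == 0%N) => /=.
  by rewrite addn1 !addSn addnS !exprS mul1r mulN1r mulN1r opprK.
by rewrite addn0 addSn exprS.
Qed.

Lemma mkE p k (j : 'I_F) : mk p F k j = (odd (k + z j k) : nat)%:R.
Proof. by rewrite ffunE coef_muk -signr_odd; case: odd. Qed.

Lemma valnat k : val (k%:R : 'I_F) = (k %% F)%N.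
Proof. by rewrite Zp_nat. Qed.

Lemma zS (j : 'I_F) k : z j k.+1 = addn (z j k) (val (j + k%:R) == 0%N).
Proof. by []. Qed.

Lemma z_small k (j : 'I_F) : (k <= F)%N -> z j k = (val (- j) < k)%N.
Proof.
have [r hr] : {r | val (-j) = r} by exists (val (-j)).
rewrite hr.
elim: k => [|k IH] hk; first by [].
rewrite [z j k.+1]/= IH ?(ltnW hk) //.
have -> : (val (j + k%:R) == 0%N) = (k == r).
  have -> : (val (j + k%:R) == 0%N) = (j + k%:R == 0) by [].
  by rewrite addrC addr_eq0 -val_eqE valnat hr modn_small.
by case: (ltngtP k r) => h; lia.
Qed.

Lemma z_add a b (j : 'I_F) : z j (a + b) = addn (z j a) (z (j + a%:R) b).
Proof.
elim: b => [|b IH]; first by rewrite !addn0.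
by rewrite addnS !zS IH natrD addrA addnA.
Qed.

Lemma pcharF : (F%:R : 'I_F) = 0.
Proof. by apply: val_inj; rewrite valnat modnn. Qed.

Lemma z_F (j : 'I_F) : z j F = 1%N.
Proof. by rewrite z_small // ltn_ord. Qed.

Lemma z_big c (j : 'I_F) : z j (F + c) = (z j c).+1.
Proof. by rewrite z_add pcharF addr0 z_F add1n. Qed.

Definition W (e : bool) (c : nat) : {ffun 'I_F -> 'Z_2} :=
  [ffun j : 'I_F => (e (+) (val (- j) < c)%N : nat)%:R].

Lemma mkW p k : (k <= F + F)%N ->
  mk p F k = W (if (k <= F)%N then odd k else ~~ odd k) (if (k <= F)%N then k else k - F)%N.
Proof.
move=> hk; apply/ffunP => j; rewrite mkE ffunE.
case: (leqP k F) => hkF.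
  by rewrite z_small // oddD oddb.
have [c hc] : exists c, k = (F + c)%N by exists (k - F)%N; rewrite subnKC // ltnW.
rewrite hc addKn z_big z_small; last by move: hk; rewrite hc; lia.
rewrite !oddD /= oddb.
by case: (odd n); case: (odd c); case: (_ < _)%N.
Qed.

Definition cnt (v : {ffun 'I_F -> 'Z_2}) : nat := (\sum_(j : 'I_F) (v j != 0%R : nat))%N.

Lemma cnt_gpow i v : cnt (gpow i v) = cnt v.
Proof.
rewrite /cnt gpowE; under eq_bigr do rewrite ffunE.
by rewrite [RHS](reindex_inj (addIr i%:R)).
Qed.

Lemma Z2nz (b : bool) : ((b : nat)%:R != 0 :> 'Z_2) = b.
Proof. by case: b. Qed.

Lemma sum_lt e c m : (\sum_(j < m) (e (+) (j < c)%N : nat))%N = if e then (m - minn m c)%N else minn m c.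
Proof.
elim: m => [|m IH]; first by rewrite big_ord0; case: e; lia.
rewrite big_ord_recr /= IH; case: e {IH} => /=; case: (ltnP m c) => h /=; lia.
Qed.

Lemma cntW e c : (c <= F)%N -> cnt (W e c) = if e then (F - c)%N else c.
Proof.
move=> hc; rewrite /cnt; under eq_bigr do rewrite ffunE Z2nz.
rewrite (reindex_inj oppr_inj); under eq_bigr => j _ do rewrite opprK.
by rewrite sum_lt; have -> : minn F c = c by lia.
Qed.

Lemma W_nonper e c i : (0 < c < F)%N -> (0 < i < F)%N -> gpow i (W e c) <> W e c.
Proof.
move=> hc hi H.
have H' t : (t < F)%N -> ((t + (F - i)) %% F < c)%N = (t < c)%N.
  move=> ht; move: (congr1 (fun v : {ffun 'I_F -> 'Z_2} => v (- (t%:R : 'I_F))) H); rewrite gpowE !ffunE opprK.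
  have -> : - (- t%:R + i%:R) = (t + (F - i))%:R :> 'I_F.
    rewrite natrD opprD opprK; congr (_ + _).
    apply/eqP; rewrite eq_sym -addr_eq0 -natrD subnK ?pcharF // ltnW //; lia.
  rewrite !valnat (modn_small ht).
  by case: (e) => /=; case: (_ < c)%N; case: (_ < c)%N.
have h1 := H' (c.-1) ltac:(lia).
have h2 := H' c ltac:(lia).
have Hm x : (F <= x < F + F)%N -> (x %% F = x - F)%N.
  move=> hx; rewrite -{1}(subnKC (proj1 (andP hx))) modnDl modn_small //; lia.
case: (ltnP (c.-1 + (F - i)) F) => hx.
  move: h1; rewrite modn_small //; lia.
move: h2; rewrite Hm; lia.
Qed.
End S.

Theorem lemma2p1 (p f : nat) (hp : prime p) (hf : (1 < f)%N) :
  (forall k : nat, (1 <= k <= ell f)%N ->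
     mk p f k = gpow k (mk p f (ell f - k)))
  /\
  (forall k1 k2 : nat, (1 <= k1 <= ell f - 1)%N -> (1 <= k2 <= ell f - 1)%N ->
     k1 <> k2 ->
     ((exists i : nat, mk p f k1 = gpow i (mk p f k2)) <-> k2 = (ell f - k1)%N))
  /\
  (forall k : nat, (1 <= k <= ell f - 1)%N -> (~~ odd f -> k <> (ell f %/ 2)%N) ->
     forall i : nat, (0 < i < f)%N -> gpow i (mk p f k) <> mk p f k).
Proof.
case: f hf => [|[|n]] // _.
set F := n.+2.
have hl : ((ell F = F /\ odd F) \/ (ell F = F + F /\ ~~ odd F))%N.
  rewrite /ell; case: (odd F); [left | right]; split => //; lia.
have P1 : forall k : nat, (1 <= k <= ell F)%N -> mk p F k = gpow k (mk p F (ell F - k)).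
  move=> k hk; apply/ffunP => j; rewrite gpowE [in RHS]ffunE !mkE.
  have Hz := z_add k (ell F - k) j; rewrite subnKC in Hz; last by case/andP: hk.
  have Hodd : odd (k + z j k) = odd ((ell F - k) + z (j + k%:R) (ell F - k)).
    case: hl => [[hl ho]|[hl ho]].
      move: Hz; rewrite hl z_F => Hz; lia.
    move: Hz; rewrite hl z_big z_F => Hz; lia.
  by rewrite Hodd.
have hlF : (ell F <= F + F)%N by case: hl => [[-> _]|[-> _]]; lia.
split => //; split.
  move=> k1 k2 h1 h2 hne; split; last first.
    by move=> ->; exists k1; apply: P1; lia.
  case=> i H.
  have := congr1 (@cnt n) H; rewrite cnt_gpow (mkW p (_ : k1 <= F + F)%N); last by lia.
  rewrite (mkW p (_ : k2 <= F + F)%N); last by lia.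
  rewrite !cntW; try by case: ifP; lia.
  case: hl => [[hl ho]|[hl ho]]; rewrite hl in h1 h2 *;
  case: (leqP k1 F) => a1; case: (leqP k2 F) => a2;
  case: (boolP (odd k1)) => o1; case: (boolP (odd k2)) => o2 /=; lia.
move=> k hk hne i hi.
rewrite mkW; last by lia.
apply: W_nonper => //.
case: hl => [[hl ho]|[hl ho]]; rewrite hl in hk hne *; case: (leqP k F) => a; try lia.
Qed.
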